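(* Let $G=(V,E)$ be a finite, undirected, unweighted, connected graph with $n=|V|$ and let $S$ be its supergraph. The 2-Opt procedure on $S$ (described in the context) runs in time $O(n^4)$ when it searches for a Hamiltonian cycle of $S$ or for a Hamiltonian path of $S$ with a fixed starting vertex, and in time $O(n^5)$ when it searches for a Hamiltonian path of $S$ (trying every starting vertex).
   Context: $\mathrm{dist}(u,v)$ is the shortest-path distance in $G$; the supergraph $S$ is the complete weighted graph on $V=\{v_1,\dots,v_n\}$ with weights $w(u,v)=\mathrm{dist}(u,v)$. 2-Opt for cycles: start with the Hamiltonian cycle $(v_1,v_2,\dots,v_n,v_1)$, stored as a doubly linked list of edges. Repeat: scan pairs of cycle edges $(c_k,c_{k+1}),(c_j,c_{j+1})$ with $k<j$ in the current cyclic order $(c_1,\dots,c_n)$; at the first pair with $w(c_k,c_{k+1})+w(c_j,c_{j+1})>w(c_k,c_j)+w(c_{k+1},c_{j+1})$, replace these two edges by $(c_k,c_j)$ and $(c_{k+1},c_{j+1})$, reversing the segment between them, and restart the scan; stop when a full scan finds no such pair. 2-Opt for paths with fixed starting vertex $s$: the same procedure applied to the Hamiltonian path starting at $s$ followed by the remaining vertices in index order; for paths without fixed start, the fixed-start procedure is run for every starting vertex. Cost model (as assumed by the paper): initialization costs $O(n)$, and each weight comparison and each edge replacement/segment reversal in the linked list costs $O(1)$. *)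

(* Defs.v *)
From mathcomp Require Import all_boot.
Set Implicit Arguments. Unset Strict Implicit. Unset Printing Implicit Defensive.

Definition simple_graph (n : nat) (e : rel 'I_n) : Prop :=
  symmetric e /\ irreflexive e.

Definition connected_graph (n : nat) (e : rel 'I_n) : Prop :=
  forall u v : 'I_n, connect e u v.

(* dist e u v = length of a shortest path from u to v: the least k such that
   there is an e-path with k edges from u to v (returns n if there is none,
   which never happens for a connected graph). This is the weight of the
   edge {u,v} in the supergraph S. *)
Definition dist (n : nat) (e : rel 'I_n) (u v : 'I_n) : nat :=
  find (fun k => [exists p : k.-tuple 'I_n, path e u p && (last u p == v)])
       (iota 0 n.+1).

Section TwoOpt.
Variables (T : eqType) (w : T -> T -> nat) (x0 : T).
(* cyc = true : tour is a Hamiltonian cycle c_0 ... c_{m-1} c_0;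
   cyc = false: tour is a Hamiltonian path c_0 ... c_{m-1}.
   x0 is an irrelevant default for nth (all indices used are in range). *)

(* number of tour edges; edge number k joins positions k and succ_idx k *)
Definition nedges (cyc : bool) (c : seq T) : nat :=
  if cyc then size c else (size c).-1.

Definition succ_idx (cyc : bool) (c : seq T) (j : nat) : nat :=
  if cyc then j.+1 %% size c else j.+1.

Definition edge_pairs (E : nat) : seq (nat * nat) :=
  flatten [seq [seq (k, j) | j <- iota k.+1 (E - k.+1)] | k <- iota 0 E].

Definition improving (cyc : bool) (c : seq T) (p : nat * nat) : bool :=
  let k := p.1 in let j := p.2 in
  let v i := nth x0 c i in
  let j' := succ_idx cyc c j in
  w (v k) (v j) + w (v k.+1) (v j') < w (v k) (v k.+1) + w (v j) (v j').

(* the 2-Opt move: replace edges (c_k,c_{k+1}),(c_j,c_{j+1}) by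
   (c_k,c_j),(c_{k+1},c_{j+1}), reversing the segment c_{k+1} .. c_j *)
Definition two_opt_move (c : seq T) (k j : nat) : seq T :=
  take k.+1 c ++ rev (take (j - k) (drop k.+1 c)) ++ drop j.+1 c.

(* Returns [Some cost] if the procedure stops
   (a full scan finds no improving pair) within [fuel] replacements, where
   cost counts one unit per weight comparison and one unit per edge
   replacement/segment reversal; returns [None] if fuel runs out. *)
Fixpoint two_opt_run (cyc : bool) (fuel : nat) (c : seq T) : option nat :=
  let ps := edge_pairs (nedges cyc c) in
  let i := find (improving cyc c) ps in
  if i < size ps then
    match fuel with
    | 0 => None
    | f.+1 =>
        let p := nth (0, 0) ps i in
        (* i+1 comparisons, then 1 replacement *)
        option_map (addn i.+2) (two_opt_run cyc f (two_opt_move c p.1 p.2))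
    end
  else Some (size ps).

End TwoOpt.

(* Hamiltonian cycle: initial cycle (v_1, ..., v_n, v_1); initialization
   costs n. *)
Definition two_opt_cycle_cost (n : nat) (e : rel 'I_n) (x0 : 'I_n)
    (fuel : nat) : option nat :=
  option_map (addn n) (two_opt_run (dist e) x0 true fuel (enum 'I_n)).

(* Hamiltonian path with fixed start s: initial path s, then the remaining
   vertices in index order; initialization costs n. *)
Definition two_opt_path_cost (n : nat) (e : rel 'I_n) (x0 : 'I_n)
    (s : 'I_n) (fuel : nat) : option nat :=
  option_map (addn n)
    (two_opt_run (dist e) x0 false fuel (s :: [seq v <- enum 'I_n | v != s])).

Definition two_opt_path_all_cost (n : nat) (e : rel 'I_n) (x0 : 'I_n)
    (fuel : nat) : option nat :=
  foldr (fun s acc =>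
           match two_opt_path_cost e x0 s fuel, acc with
           | Some a, Some b => Some (a + b)
           | _, _ => None
           end) (Some 0) (enum 'I_n).

(* Main.v *)
Require Import Defs.
From mathcomp Require Import all_boot zify.

Section Weights.
Variables (T : eqType) (w : T -> T -> nat) (x0 : T).
Hypothesis wsym : forall a b, w a b = w b a.

Fixpoint pw (x : T) (s : seq T) : nat :=
  if s is y :: s' then w x y + pw y s' else 0.
Definition lw (s : seq T) : nat := if s is x :: s' then pw x s' else 0.

Lemma pw_cat x s1 s2 : pw x (s1 ++ s2) = pw x s1 + pw (last x s1) s2.
Proof. elim: s1 x => [|y s IH] x //=. by rewrite IH addnA. Qed.

Lemma lw_cat s1 s2 : lw (s1 ++ s2) = lw s1 + lw s2 +
  (if (s1 != [::]) && (s2 != [::]) then w (last x0 s1) (head x0 s2) else 0).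
Proof.
case: s1 => [|a s1] /=; first by rewrite add0n addn0.
rewrite pw_cat; case: s2 => [|b s2] /=; first by rewrite !addn0.
by rewrite (addnC (w _ b)) addnA.
Qed.

Lemma lw_rcons s x : s != [::] -> lw (rcons s x) = lw s + w (last x0 s) x.
Proof. case: s => [|a s] //= _. by rewrite -cats1 pw_cat /= addn0. Qed.

Lemma lw_rev s : lw (rev s) = lw s.
Proof.
suff H : forall x s, lw (rev (x :: s)) = pw x s.
  by case: s => [|x s] //; rewrite H.
move=> x {}s; elim: s x => [|y s IH] x; first by rewrite /= .
rewrite rev_cons lw_rcons; last by rewrite rev_cons; case: (rev s).
rewrite IH rev_cons last_rcons /= wsym addnC //.
Qed.

Lemma head_rev s : head x0 (rev s) = last x0 s.
Proof. by case/lastP: s => [|s y] //; rewrite rev_rcons last_rcons. Qed.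
Lemma last_rev s : last x0 (rev s) = head x0 s.
Proof. by case: s => [|y s] //; rewrite rev_cons last_rcons. Qed.

Definition pot (cyc : bool) (s : seq T) :=
  if cyc then lw s + w (last x0 s) (head x0 s) else lw s.

Lemma core_path A B D : A != [::] -> B != [::] -> D != [::] ->
  w (last x0 A) (last x0 B) + w (head x0 B) (head x0 D) <
  w (last x0 A) (head x0 B) + w (last x0 B) (head x0 D) ->
  lw (A ++ rev B ++ D) < lw (A ++ B ++ D).
Proof.
move=> nA nB nD H.
have nrB : rev B != [::] by rewrite -size_eq0 size_rev size_eq0.
rewrite !lw_cat lw_rev nA nB nD nrB /= ?head_rev ?last_rev.
have -> : (rev B ++ D != [::]) by move: nrB; case: (rev B).
have -> : (B ++ D != [::]) by move: nB; case: (B).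
have -> : head x0 (rev B ++ D) = last x0 B by move: nrB; rewrite -head_rev; case: (rev B).
have -> : head x0 (B ++ D) = head x0 B by move: nB; case: (B).
lia.
Qed.

Lemma core_cyc A B D : A != [::] -> B != [::] -> D != [::] ->
  w (last x0 A) (last x0 B) + w (head x0 B) (head x0 D) <
  w (last x0 A) (head x0 B) + w (last x0 B) (head x0 D) ->
  pot true (A ++ rev B ++ D) < pot true (A ++ B ++ D).
Proof.
move=> nA nB nD H; have := @core_path A B D nA nB nD H; rewrite /pot.
have hh : forall X, head x0 (A ++ X) = head x0 A by move: nA; case: (A).
have ll : forall X, last x0 (X ++ D) = last x0 D.
  by move=> X; rewrite last_cat; move: nD; case: (D).
rewrite !hh !catA !ll; lia.
Qed.

Lemma core_wrap A B : A != [::] -> B != [::] ->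
  w (last x0 A) (last x0 B) + w (head x0 B) (head x0 A) <
  w (last x0 A) (head x0 B) + w (last x0 B) (head x0 A) ->
  pot true (A ++ rev B) < pot true (A ++ B).
Proof.
move=> nA nB H.
have nrB : rev B != [::] by rewrite -size_eq0 size_rev size_eq0.
rewrite /pot !lw_cat lw_rev nA nB nrB /= head_rev.
have hh : forall X, head x0 (A ++ X) = head x0 A by move: nA; case: (A).
have ll : forall X, X != [::] -> last x0 (A ++ X) = last x0 X.
  by move=> X; rewrite last_cat; case: (X).
rewrite !hh !ll // last_rev; lia.
Qed.

Lemma pw_bound B x s : (forall a b, w a b <= B) -> pw x s <= size s * B.
Proof. move=> wb; elim: s x => [|y s IH] x //=. have := wb x y; have := IH y; lia. Qed.

Lemma pot_bound B cyc s : (forall a b, w a b <= B) -> pot cyc s <= (size s).+1 * B.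
Proof.
move=> wb; have : lw s <= size s * B by case: s => //= x s; have := @pw_bound B x s wb; lia.
rewrite /pot; case: cyc; have := wb (last x0 s) (head x0 s); lia.
Qed.

End Weights.

Lemma edge_pairs_mem E k j : (k, j) \in edge_pairs E -> k < j < E.
Proof.
case/flatten_mapP => k' /[!mem_iota] /andP [_ hk'] /mapP [j' /[!mem_iota] hj [-> ->]].
lia.
Qed.

Lemma step_dec (T : eqType) (w : T -> T -> nat) (x0 : T)
  (wsym : forall a b, w a b = w b a) cyc c p :
  p \in edge_pairs (nedges cyc c) -> improving w x0 cyc c p ->
  pot T w x0 cyc (two_opt_move c p.1 p.2) < pot T w x0 cyc c /\
  size (two_opt_move c p.1 p.2) = size c.
Proof.
case: p => k j /= /edge_pairs_mem hkj.
have hE : nedges cyc c <= size c by rewrite /nedges; case: (cyc); lia.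
have hk : k < j by case/andP: hkj.
have hj : j < size c by case/andP: hkj => _ h; exact: leq_trans h hE.
rewrite /two_opt_move /improving /succ_idx /=.
have hc : c = take k.+1 c ++ take (j - k) (drop k.+1 c) ++ drop j.+1 c.
  have -> : drop j.+1 c = drop (j - k) (drop k.+1 c).
    by rewrite drop_drop; congr drop; clear -hk; lia.
  by rewrite !cat_take_drop.
have sA : size (take k.+1 c) = k.+1 by rewrite size_takel //; clear -hk hj; lia.
have sB : size (take (j - k) (drop k.+1 c)) = j - k.
  by rewrite size_takel // size_drop; clear -hk hj; lia.
have sD : size (drop j.+1 c) = size c - j.+1 by rewrite size_drop.
have e1 : nth x0 c k = last x0 (take k.+1 c) by rewrite -nth_last sA nth_take.
have e2 : nth x0 c k.+1 = head x0 (take (j - k) (drop k.+1 c)).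
  by rewrite -nth0 nth_take ?nth_drop ?addn0 //; clear -hk; lia.
have e3 : nth x0 c j = last x0 (take (j - k) (drop k.+1 c)).
  rewrite -nth_last sB nth_take ?nth_drop; last by clear -hk; lia.
  by congr nth; clear -hk; lia.
have e4 : nth x0 c j.+1 = head x0 (drop j.+1 c) by rewrite -nth0 nth_drop addn0.
move: sA sB sD e1 e2 e3 e4 hc.
set A := take k.+1 c; set B := take (j - k) (drop k.+1 c); set D := drop j.+1 c.
move=> sA sB sD e1 e2 e3 e4 hc.
have nA : A != [::] by rewrite -size_eq0 sA.
have nB : B != [::] by rewrite -size_eq0 sB; clear -hk; lia.
have sz : size (A ++ rev B ++ D) = size c by rewrite [in RHS]hc !size_cat size_rev.
move=> Himp; split => //; move: Himp.
rewrite e1 e2 e3.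
case: cyc hE hkj => hE hkj.
- case: (ltnP j.+1 (size c)) => hj2.
  + rewrite modn_small // e4 => H.
    have nD : D != [::] by rewrite -size_eq0 sD; clear -hj2; lia.
    rewrite [in X in _ < X]hc; exact: (core_cyc _ _ _ wsym _ _ _ nA nB nD H).
  + have hj' : j.+1 = size c by clear -hj hj2; lia.
    rewrite hj' modnn nth0 => H.
    have D0 : D = [::] by apply/eqP; rewrite -size_eq0 sD; clear -hj'; lia.
    have hh : head x0 c = head x0 A by rewrite hc; move: nA; case: (A).
    rewrite hh in H.
    rewrite [in X in _ < X]hc D0 !cats0; exact: (core_wrap _ _ _ wsym).
- rewrite /nedges in hE hkj.
  rewrite e4 => H. rewrite /pot [in X in _ < X]hc; apply: (core_path _ _ x0 wsym) => //.
  rewrite -size_eq0 sD. case/andP: hkj => _ h. clear -h; lia.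
Qed.

Lemma run_bound (T : eqType) (w : T -> T -> nat) (x0 : T)
  (wsym : forall a b, w a b = w b a) cyc : forall fuel c,
  pot T w x0 cyc c < fuel -> exists cost,
  two_opt_run w x0 cyc fuel c = Some cost /\
  cost <= pot T w x0 cyc c * (size (edge_pairs (nedges cyc c))).+1
          + size (edge_pairs (nedges cyc c)).
Proof.
elim=> [|f IH] c hp //=.
set ps := edge_pairs (nedges cyc c).
case: ifP => hi; last by exists (size ps); split => //; apply: leq_addl.
set i := find _ _.
set p := nth (0, 0) ps i.
have pin : p \in ps by apply: mem_nth.
have imp : improving w x0 cyc c p by apply: nth_find; rewrite has_find.
have [dec sz] := step_dec _ _ _ wsym _ _ _ pin imp.
have [cost' [-> hc]] := IH (two_opt_move c p.1 p.2) (leq_trans dec (hp : _ <= f.+1)).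
exists (i.+2 + cost'); split => //.
move: hc; rewrite /nedges sz -/(nedges cyc c) -/ps.
set P := size ps in hi *; set q := pot _ _ _ _ (two_opt_move _ _ _) in dec *.
set r := pot _ _ _ _ c in dec *.
move=> hc.
have : q * P.+1 + P.+1 <= r * P.+1.
  by rewrite -mulSnr leq_mul2r dec orbT.
clear -hc hi; lia.
Qed.

Lemma dist_le n (e : rel 'I_n) u v : dist e u v <= n.+1.
Proof. by rewrite /dist; apply: leq_trans (find_size _ _) _; rewrite size_iota. Qed.

Lemma dist_sym n (e : rel 'I_n) : symmetric e -> forall u v, dist e u v = dist e v u.
Proof.
move=> esym.
suff H : forall u v k,
  [exists p : k.-tuple 'I_n, path e u p && (last u p == v)] ->
  [exists p : k.-tuple 'I_n, path e v p && (last v p == u)].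
  by move=> u v; rewrite /dist; apply: eq_find => k; apply/idP/idP; apply: H.
move=> u v k /existsP [p /andP [hp /eqP hl]].
apply/existsP.
have sq : size (rev (belast u p)) == k by rewrite size_rev size_belast size_tuple.
exists (Tuple sq) => /=.
rewrite -hl rev_path.
have -> : path (fun z => e^~ z) u p = path e u p.
  by apply: eq_path => a b; rewrite esym.
rewrite hp /=.
have h1 : last u p :: rev (belast u p) = rev (u :: p) by rewrite [u :: p]lastI rev_rcons.
have -> : last (last u p) (rev (belast u p)) = last u (last u p :: rev (belast u p)) by [].
by rewrite h1 rev_cons last_rcons.
Qed.

Lemma sumn_map_le (s : seq nat) (f : nat -> nat) B :
  (forall x, f x <= B) -> sumn (map f s) <= size s * B.
Proof. move=> hf; elim: s => //= a s IH; have := hf a; lia. Qed.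

Lemma size_edge_pairs E : size (edge_pairs E) <= E * E.
Proof.
rewrite /edge_pairs size_flatten /shape -map_comp.
have := @sumn_map_le (iota 0 E) (size \o (fun k : nat => [seq (k, j) | j <- iota k.+1 (E - k.+1)])) E.
rewrite size_iota; apply => k /=; rewrite size_map size_iota; lia.
Qed.

Definition fuelN n := (n + 2) * (n + 1) + 1.

Lemma run_gen n (e : rel 'I_n) (x0 : 'I_n) cyc c : symmetric e -> 0 < n ->
  size c <= n.+1 -> nedges cyc c <= n -> exists cost,
  two_opt_run (dist e) x0 cyc (fuelN n) c = Some cost /\ n + cost <= 20 * n ^ 4.
Proof.
move=> esym hn hs hE.
have wsym := @dist_sym n e esym.
have hpot := pot_bound _ (dist e) x0 n.+1 cyc c (@dist_le n e).
have hpot' : pot _ (dist e) x0 cyc c <= (n + 2) * (n + 1).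
  apply: leq_trans hpot _; clear -hs; nia.
have hf : (n + 2) * (n + 1) < fuelN n by rewrite /fuelN; lia.
have [cost [hr hc]] := run_bound _ _ _ wsym cyc (fuelN n) c (leq_ltn_trans hpot' hf).
exists cost; split => //.
have hP := size_edge_pairs (nedges cyc c).
have hP' : size (edge_pairs (nedges cyc c)) <= n * n.
  apply: leq_trans hP _; exact: leq_mul.
move: hc hP' hpot'.
set P := size _; set r := pot _ _ _ _ _.
move=> hc hP' hpot'.
have a1 : r <= 6 * (n * n) by nia.
have a2 : P.+1 <= 2 * (n * n) by nia.
have a3 : r * P.+1 <= 12 * (n * n * (n * n)).
  have := leq_mul a1 a2; nia.
have a4 : n <= n * n * (n * n) by nia.
have a5 : n * n <= n * n * (n * n) by nia.
have -> : n ^ 4 = n * n * (n * n) by rewrite !expnS expn0 muln1 !mulnA.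
nia.
Qed.

Lemma path_one n (hn : 0 < n) (e : rel 'I_n) (s : 'I_n) : simple_graph e ->
  exists cost, two_opt_path_cost e (Ordinal hn) s (fuelN n) = Some cost /\
     cost <= 20 * n ^ 4.
Proof.
move=> [esym _].
have hs : size (s :: [seq v <- enum 'I_n | v != s]) <= n.+1.
  by rewrite /= ltnS size_filter (leq_trans (count_size _ _)) // size_enum_ord.
have hE : nedges false (s :: [seq v <- enum 'I_n | v != s]) <= n by move: hs; rewrite /nedges /= ltnS.
have [cost [hr hc]] := run_gen n e (Ordinal hn) _ _ esym hn hs hE.
by exists (n + cost); rewrite /two_opt_path_cost hr.
Qed.

Theorem theorem2 :
  (exists C : nat, forall (n : nat) (hn : 0 < n) (e : rel 'I_n),
     simple_graph e -> connected_graph e ->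
     exists fuel cost, two_opt_cycle_cost e (Ordinal hn) fuel = Some cost
                       /\ cost <= C * n ^ 4) /\
  (exists C : nat, forall (n : nat) (hn : 0 < n) (e : rel 'I_n) (s : 'I_n),
     simple_graph e -> connected_graph e ->
     exists fuel cost, two_opt_path_cost e (Ordinal hn) s fuel = Some cost
                       /\ cost <= C * n ^ 4) /\
  (exists C : nat, forall (n : nat) (hn : 0 < n) (e : rel 'I_n),
     simple_graph e -> connected_graph e ->
     exists fuel cost, two_opt_path_all_cost e (Ordinal hn) fuel = Some cost
                       /\ cost <= C * n ^ 5).
Proof.
split; [|split].
- exists 20 => n hn e [esym _] _.
  have hs : size (enum 'I_n) <= n.+1 by rewrite size_enum_ord.
  have hE : nedges true (enum 'I_n) <= n by rewrite /nedges size_enum_ord.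
  have [cost [hr hc]] := run_gen n e (Ordinal hn) _ _ esym hn hs hE.
  by exists (fuelN n), (n + cost); rewrite /two_opt_cycle_cost hr.
- exists 20 => n hn e s hg _.
  have [cost [hr hc]] := path_one n hn e s hg.
  by exists (fuelN n), cost.
- exists 20 => n hn e hg _.
  exists (fuelN n).
  suff H : forall l : seq 'I_n, exists cost,
      foldr (fun s acc =>
           match two_opt_path_cost e (Ordinal hn) s (fuelN n), acc with
           | Some a, Some b => Some (a + b)
           | _, _ => None
           end) (Some 0) l = Some cost /\ cost <= size l * (20 * n ^ 4).
    have [cost [h1 h2]] := H (enum 'I_n).
    exists cost; split; first exact: h1.
    move: h2; rewrite size_enum_ord expnS; lia.
  elim=> [|a l [c [IH1 IH2]]] /=; first by exists 0.
  have [ca [ha hca]] := path_one n hn e a hg.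
  exists (ca + c); rewrite ha IH1; split => //; lia.
Qed.
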